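(* Let $(\mathbf{k},\phi)$ be a difference field of characteristic zero such that $\mathbf{k}$ is a real field and its field of constants $C:=\mathbf{k}^{\phi}$ is real closed. Let $A\in \mathrm{GL}_n(\mathbf{k})$ and let $(R,\phi)$ be a Picard-Vessiot extension for $\phi Y=AY$ over $(\mathbf{k},\phi)$. Assume that $R\neq R[i]$, i.e. there is no $x\in R$ with $x^2+1=0$. Then $(R[i],\phi)$ is a Picard-Vessiot extension for $\phi Y=AY$ over $(\mathbf{k}[i],\phi)$.
   Context: A difference ring $(R,\phi)$ is a ring $R$ with a ring automorphism $\phi$; a difference ideal is an ideal stable under $\phi$; $(R,\phi)$ is simple if its only difference ideals are $(0)$ and $R$. A difference ring extension of $(\mathbf{k},\phi)$ is a ring extension with an automorphism restricting to $\phi$ on $\mathbf{k}$. A field is real if $0$ is not a sum of squares of nonzero elements; it is real closed if it has no proper real algebraic extension. A Picard-Vessiot extension for $\phi Y=AY$ over $(\mathbf{k},\phi)$ is a difference ring extension $(R,\phi)$ of $(\mathbf{k},\phi)$ such that (1) there exists $U\in\mathrm{GL}_n(R)$ with $\phi(U)=AU$; (2) $R$ is generated as a $\mathbf{k}$-algebra by the entries of $U$ and $\det(U)^{-1}$; (3) $(R,\phi)$ is a simple difference ring. For a difference ring $R$ with no element $x$ satisfying $x^2+1=0$, $R[i]:=R[X]/(X^2+1)$, with $\phi$ extended by $\phi(i)=i$; if $R$ contains such an $x$, the convention is $R[i]=R$. In particular $\mathbf{k}[i]$ is defined this way. *)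

(* Defs.v *)
From HB Require Import structures.
From mathcomp Require Import all_boot all_order all_algebra.
From mathcomp Require Import ring.
Set Implicit Arguments.
Unset Strict Implicit.
Unset Printing Implicit Defensive.
Import Order.TTheory GRing.Theory Num.Theory.
Local Open Scope ring_scope.

(* R[i] := R[X]/(X^2+1), represented concretely by its R-basis {1, i}: *)
(* an element a + b i is the pair (a, b); the multiplication is the    *)
(* one induced by X^2 = -1.                                            *)
Record cplx (R : Type) := Cplx { cre : R; cim : R }.

Definition cplx_to_pair (R : Type) (x : cplx R) : R * R := (cre x, cim x).
Definition pair_to_cplx (R : Type) (p : R * R) : cplx R := Cplx p.1 p.2.
Lemma cplx_pairK (R : Type) : cancel (@cplx_to_pair R) (@pair_to_cplx R).
Proof. by case. Qed.

HB.instance Definition _ (R : eqType) :=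
  Equality.copy (cplx R) (can_type (@cplx_pairK R)).
HB.instance Definition _ (R : choiceType) :=
  Choice.copy (cplx R) (can_type (@cplx_pairK R)).

Definition cplx0 (R : zmodType) : cplx R := Cplx 0 0.
Definition cplx_opp (R : zmodType) (x : cplx R) := Cplx (- cre x) (- cim x).
Definition cplx_add (R : zmodType) (x y : cplx R) :=
  Cplx (cre x + cre y) (cim x + cim y).

Lemma cplx_addA (R : zmodType) : associative (@cplx_add R).
Proof. by move=> [a b] [c d] [e f]; rewrite /cplx_add /= !addrA. Qed.
Lemma cplx_addC (R : zmodType) : commutative (@cplx_add R).
Proof. by move=> [a b] [c d]; rewrite /cplx_add /= (addrC a) (addrC b). Qed.
Lemma cplx_add0 (R : zmodType) : left_id (@cplx0 R) (@cplx_add R).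
Proof. by move=> [a b]; rewrite /cplx_add /= !add0r. Qed.
Lemma cplx_addN (R : zmodType) :
  left_inverse (@cplx0 R) (@cplx_opp R) (@cplx_add R).
Proof. by move=> [a b]; rewrite /cplx_add /= !addNr. Qed.

HB.instance Definition _ (R : zmodType) :=
  GRing.isZmodule.Build (cplx R) (@cplx_addA R) (@cplx_addC R)
    (@cplx_add0 R) (@cplx_addN R).

Definition cplx1 (R : comNzRingType) : cplx R := Cplx 1 0.
Definition cplx_mul (R : comNzRingType) (x y : cplx R) :=
  Cplx (cre x * cre y - cim x * cim y) (cre x * cim y + cim x * cre y).

Lemma cplx_mulA (R : comNzRingType) : associative (@cplx_mul R).
Proof. by move=> [a b] [c d] [e f]; rewrite /cplx_mul /=; congr Cplx; ring. Qed.
Lemma cplx_mulC (R : comNzRingType) : commutative (@cplx_mul R).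
Proof. by move=> [a b] [c d]; rewrite /cplx_mul /=; congr Cplx; ring. Qed.
Lemma cplx_mul1 (R : comNzRingType) : left_id (@cplx1 R) (@cplx_mul R).
Proof. by move=> [a b]; rewrite /cplx_mul /=; congr Cplx; ring. Qed.
Lemma cplx_mulDl (R : comNzRingType) :
  left_distributive (@cplx_mul R) (@cplx_add R).
Proof.
by move=> [a b] [c d] [e f]; rewrite /cplx_mul /cplx_add /=; congr Cplx; ring.
Qed.
Lemma cplx1_neq0 (R : comNzRingType) : @cplx1 R != @cplx0 R.
Proof. by apply/eqP => -[] /eqP; rewrite oner_eq0. Qed.

HB.instance Definition _ (R : comNzRingType) :=
  GRing.Zmodule_isComNzRing.Build (cplx R) (@cplx_mulA R) (@cplx_mulC R)
    (@cplx_mul1 R) (@cplx_mulDl R) (@cplx1_neq0 R).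

Definition cplx_of (R : zmodType) (a : R) : cplx R := Cplx a 0.

Definition cplx_map (R S : Type) (f : R -> S) (x : cplx R) : cplx S :=
  Cplx (f (cre x)) (f (cim x)).

Lemma cplx_map_zmod (R S : comNzRingType) (f : {rmorphism R -> S}) :
  zmod_morphism (cplx_map f).
Proof. by move=> [a b] [c d]; rewrite /cplx_map /= !rmorphB. Qed.
Lemma cplx_map_monoid (R S : comNzRingType) (f : {rmorphism R -> S}) :
  monoid_morphism (cplx_map f).
Proof.
split; first by rewrite /cplx_map /= rmorph1 rmorph0.
by move=> [a b] [c d]; rewrite /cplx_map /= !(rmorphB, rmorphD, rmorphM).
Qed.

HB.instance Definition _ (R S : comNzRingType) (f : {rmorphism R -> S}) :=
  GRing.isZmodMorphism.Build (cplx R) (cplx S) (cplx_map f) (cplx_map_zmod f).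
HB.instance Definition _ (R S : comNzRingType) (f : {rmorphism R -> S}) :=
  GRing.isMonoidMorphism.Build (cplx R) (cplx S) (cplx_map f)
    (cplx_map_monoid f).

Definition diff_ideal (S : comNzRingType) (phi : S -> S) (I : S -> Prop) :=
  [/\ I 0,
      (forall x y, I x -> I y -> I (x + y)),
      (forall r x, I x -> I (r * x)) &
      (forall x, I x -> I (phi x))].

Definition simple_diff_ring (S : comNzRingType) (phi : S -> S) :=
  forall I, diff_ideal phi I -> (forall x, I x -> x = 0) \/ (forall x, I x).

(* S is generated, as an algebra over K via iota, by the entries of U and
   det(U)^-1 : every subset of S containing iota(K), the entries of U and
   the inverse of det U, and closed under + and *, is all of S. *)
Definition generated_by (K S : comNzRingType) (iota : K -> S) (n : nat)
    (U : 'M[S]_n) :=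
  forall P : S -> Prop,
    (forall a, P (iota a)) ->
    (forall i j, P (U i j)) ->
    (forall d, d * \det U = 1 -> P d) ->
    (forall x y, P x -> P y -> P (x + y)) ->
    (forall x y, P x -> P y -> P (x * y)) ->
    forall x, P x.

(* (S, phiS) is a Picard-Vessiot extension for phi Y = A Y over (K, phiK),
   the inclusion of K into S being the (injective) ring morphism iota.   *)
Definition is_PV (K S : comNzRingType) (phiK : {rmorphism K -> K})
    (phiS : {rmorphism S -> S}) (iota : {rmorphism K -> S}) (n : nat)
    (A : 'M[K]_n) : Prop :=
  [/\ injective iota,
      bijective phiS,
      (forall a, phiS (iota a) = iota (phiK a)) &
      exists U : 'M[S]_n,
        [/\ (exists d, d * \det U = 1),
            map_mx phiS U = map_mx iota A *m U,
            generated_by iota U &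
            simple_diff_ring phiS]].

Definition real_field (F : fieldType) :=
  forall s : seq F, s != [::] -> all (fun x => x != 0) s ->
    \sum_(x <- s) x ^+ 2 != 0.

(* Main.v *)
Require Import Defs.
From HB Require Import structures.
From mathcomp Require Import all_boot all_order all_algebra.
Import GRing.Theory Num.Theory.
Local Open Scope ring_scope.

Section Aux.
Variable R : comNzRingType.
Lemma addcE (x y : cplx R) : x + y = Cplx (cre x + cre y) (cim x + cim y).
Proof. by []. Qed.
Lemma mulcE (x y : cplx R) :
  x * y = Cplx (cre x * cre y - cim x * cim y) (cre x * cim y + cim x * cre y).
Proof. by []. Qed.
Lemma onecE : (1 : cplx R) = Cplx 1 0. Proof. by []. Qed.
Lemma zerocE : (0 : cplx R) = Cplx 0 0. Proof. by []. Qed.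
Lemma oppcE (x : cplx R) : - x = Cplx (- cre x) (- cim x). Proof. by []. Qed.

Lemma cplx_of_zmod : zmod_morphism (@cplx_of R).
Proof. by move=> a b; rewrite addcE oppcE /cplx_of /= subr0. Qed.
Lemma cplx_of_monoid : monoid_morphism (@cplx_of R).
Proof.
split; first by [].
by move=> a b; rewrite mulcE /cplx_of /= !mulr0 !mul0r subr0 addr0.
Qed.
HB.instance Definition _ :=
  GRing.isZmodMorphism.Build R (cplx R) (@cplx_of R) cplx_of_zmod.
HB.instance Definition _ :=
  GRing.isMonoidMorphism.Build R (cplx R) (@cplx_of R) cplx_of_monoid.
End Aux.

Lemma map_of (R S : comNzRingType) (f : {rmorphism R -> S}) (a : R) :
  cplx_map f (cplx_of a) = cplx_of (f a).
Proof. by rewrite /cplx_map /cplx_of /= rmorph0. Qed.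

Lemma simple_cplx (R : comNzRingType) (phiR : {rmorphism R -> R}) :
  simple_diff_ring phiR -> (forall x : R, x ^+ 2 + 1 != 0) ->
  simple_diff_ring (cplx_map phiR).
Proof.
move=> simR nosq I [Iz ID IM IP].
pose J := fun a : R => exists b, I (Cplx a b).
have JI : diff_ideal phiR J.
  split.
  - by exists 0.
  - move=> x y [b Hb] [b' Hb']; exists (b + b'); exact: (ID _ _ Hb Hb').
  - move=> r x [b Hb]; exists (r * b).
    have := IM (cplx_of r) _ Hb; rewrite mulcE /cplx_of /=.
    by rewrite !mul0r subr0 addr0.
  - move=> x [b Hb]; exists (phiR b); exact: (IP _ Hb).
have iE (a b : R) : Cplx 0 1 * Cplx a b = Cplx (- b) a.
  by rewrite mulcE /= mul0r mul1r sub0r mul0r add0r mul1r.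
case: (simR J JI) => [J0|JT].
  left=> -[a b] Hx.
  have a0 : a = 0 by apply: J0; exists b.
  have := IM (Cplx 0 1) _ Hx; rewrite iE => H.
  have : - b = 0 by apply: J0; exists a.
  by move/eqP; rewrite oppr_eq0 => /eqP ->; rewrite a0.
have [c Hc] := JT 1.
pose I0 := fun a : R => I (Cplx a 0).
have I0I : diff_ideal phiR I0.
  split.
  - exact: Iz.
  - move=> x y Hx Hy; have := ID _ _ Hx Hy; by rewrite addcE /= addr0.
  - move=> r x Hx; have := IM (cplx_of r) _ Hx; rewrite mulcE /cplx_of /=.
    by rewrite !mul0r mulr0 subr0 addr0.
  - move=> x Hx; have := IP _ Hx; by rewrite /cplx_map /= rmorph0.
case: (simR I0 I0I) => [Z0|ZT]; last first.
  right=> x; have := IM x _ (ZT 1); by rewrite -onecE mulr1.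
exfalso.
have H1 := IM (Cplx 0 1) _ Hc; rewrite iE in H1.
have H2 := IM (cplx_of c) _ Hc; rewrite mulcE /cplx_of /= in H2.
have H3 := ID _ _ H1 H2.
have H4 := IM (Cplx 0 1) _ H3; rewrite iE /= in H4.
rewrite !mulr1 !mul0r !subr0 addNr !addr0 in H4.
have := Z0 _ H4; move/eqP; rewrite oppr_eq0 addrC -expr2.
by move/negP: (nosq c).
Qed.

Theorem lemma2p4 (k : fieldType) (phik : {rmorphism k -> k})
    (C : rcfType) (iC : {rmorphism C -> k})
    (n : nat) (A : 'M[k]_n)
    (R : comNzRingType) (phiR : {rmorphism R -> R}) (iota : {rmorphism k -> R}) :
  bijective phik ->
  [pchar k] =i pred0 ->
  real_field k ->
  (forall x : k, phik x = x <-> exists c : C, x = iC c) ->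
  A \in unitmx ->
  is_PV phik phiR iota A ->
  (forall x : R, x ^+ 2 + 1 != 0) ->
  is_PV (cplx_map phik) (cplx_map phiR) (cplx_map iota) (map_mx (@cplx_of k) A).
Proof.
move=> _ _ _ _ _ [iinj [g gK Kg] comm [U [[d Hd] HU gen simR]]] nosq.
split.
- move=> [a b] [a' b'] [/iinj -> /iinj ->]; done.
- exists (cplx_map g); move=> -[a b]; [rewrite /cplx_map /= !gK // | change (Cplx (phiR (g a)) (phiR (g b)) = Cplx a b); by rewrite !Kg].
- move=> [a b]; change (Cplx (phiR (iota a)) (phiR (iota b)) = Cplx (iota (phik a)) (iota (phik b))); by rewrite !comm.
exists (map_mx (@cplx_of R) U); split.
- exists (cplx_of d); by rewrite det_map_mx -rmorphM Hd.
- have E1 : map_mx (cplx_map iota) (map_mx (@cplx_of k) A) = map_mx (@cplx_of R) (map_mx iota A).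
    by apply/matrixP => i j; rewrite !mxE map_of.
  have E2 : map_mx (cplx_map phiR) (map_mx (@cplx_of R) U) = map_mx (@cplx_of R) (map_mx phiR U).
    by apply/matrixP => i j; rewrite !mxE map_of.
  by rewrite E1 E2 HU map_mxM.
- move=> P Pk PU Pd PD PM [a b].
  have Pof : forall x, P (cplx_of x).
    apply: gen.
    + by move=> y; rewrite -map_of; apply: Pk.
    + by move=> i j; have := PU i j; rewrite mxE.
    + by move=> e He; apply: Pd; rewrite det_map_mx -rmorphM He.
    + by move=> x y; rewrite rmorphD; apply: PD.
    + by move=> x y; rewrite rmorphM; apply: PM.
  have -> : Cplx a b = cplx_of a + Cplx 0 1 * cplx_of b.
    by rewrite addcE mulcE /cplx_of /= !mul0r !mul1r !subr0 !addr0 !add0r.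
  apply: PD => //; apply: PM => //.
  have -> : Cplx (0:R) 1 = cplx_map iota (Cplx 0 1) by rewrite /cplx_map /= rmorph0 rmorph1.
  exact: Pk.
- exact: simple_cplx.
Qed.
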